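(* Let $\mathbb K$ be a field, let $A,A^*$ be a TD pair over $\mathbb K$, and let $q$ be a nonzero scalar in $\mathbb K$ with $q\ne 1,-1$. Then the following are equivalent: (i) $A,A^*$ satisfy the $q$-Serre relations $A^3A^*-(q+q^{-1}+1)A^2A^*A+(q+q^{-1}+1)AA^*A^2-A^*A^3=0$ and $A^{*3}A-(q+q^{-1}+1)A^{*2}AA^*+(q+q^{-1}+1)A^*AA^{*2}-AA^{*3}=0$; (ii) there exists an eigenvalue sequence for $A,A^*$ which is in $q$-geometric progression, and there exists a dual eigenvalue sequence for $A,A^*$ which is in $q$-geometric progression.
   Context: A TD pair on a finite-dimensional nonzero $\mathbb K$-vector space $V$ is an ordered pair $A,A^*$ of diagonalizable linear maps $V\to V$ such that there is an ordering $V_0,\dots,V_d$ of the eigenspaces of $A$ with $A^*V_i\subseteq V_{i-1}+V_i+V_{i+1}$ ($V_{-1}=V_{d+1}=0$), an ordering $V^*_0,\dots,V^*_\delta$ of the eigenspaces of $A^*$ with $AV^*_i\subseteq V^*_{i-1}+V^*_i+V^*_{i+1}$ ($V^*_{-1}=V^*_{\delta+1}=0$), and no subspace other than $0,V$ is invariant under both $A$ and $A^*$. An eigenvalue sequence for $A,A^*$ is an ordering $\theta_0,\dots,\theta_d$ of the distinct eigenvalues of $A$ such that the corresponding eigenspaces satisfy the first ordering condition; a dual eigenvalue sequence for $A,A^*$ is an eigenvalue sequence for the pair $A^*,A$. A sequence $\theta_0,\dots,\theta_d$ is in $q$-geometric progression if $\theta_i=\theta_{i-1}q$ for $1\le i\le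 d$. *)

(* Defs.v *)
From HB Require Import structures.
From mathcomp Require Import all_boot all_order all_algebra.
Set Implicit Arguments. Unset Strict Implicit. Unset Printing Implicit Defensive.
Import GRing.Theory.
Local Open Scope ring_scope.

Section TD.
Variables (K : fieldType) (V : vectType K).

Definition diagonalizable (A : 'End(V)) : Prop :=
  exists s : seq K, (\sum_(a <- s) passmx.leigenspace A a)%VS = fullv.

Definition eigsp (A : 'End(V)) (th : seq K) (i : nat) : {vspace V} :=
  if (i < size th)%N then passmx.leigenspace A th`_i else 0%VS.

(* th is an ordering of the distinct eigenvalues of A such that
   As V_i <= V_{i-1} + V_i + V_{i+1}, with V_{-1} = V_{d+1} = 0. *)
Definition eig_seq (A As : 'End(V)) (th : seq K) : Prop :=
  [/\ uniq th,
      (forall a : K, passmx.leigenvalue A a <-> a \in th) &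
      (forall i : nat, (i < size th)%N ->
         (As @: eigsp A th i <=
            (if i is j.+1 then eigsp A th j else 0%VS)
            + eigsp A th i + eigsp A th i.+1)%VS)].

Definition eigenvalue_sequence (A As : 'End(V)) (th : seq K) := eig_seq A As th.
Definition dual_eigenvalue_sequence (A As : 'End(V)) (th : seq K) := eig_seq As A th.

Definition TDpair (A As : 'End(V)) : Prop :=
  [/\ (0 < \dim (fullv : {vspace V}))%N,
      diagonalizable A /\ diagonalizable As,
      (exists th, eig_seq A As th),
      (exists th, eig_seq As A th) &
      (forall W : {vspace V}, (A @: W <= W)%VS -> (As @: W <= W)%VS ->
         W = 0%VS \/ W = fullv)].

Definition qSerre (q : K) (A B : 'End(V)) : Prop :=
  forall v : V,
    A (A (A (B v))) - (q + q^-1 + 1) *: A (A (B (A v)))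
    + (q + q^-1 + 1) *: A (B (A (A v))) - B (A (A (A v))) = 0 :> V.

Definition qgeometric (q : K) (th : seq K) : Prop :=
  forall i : nat, (0 < i < size th)%N -> th`_i = th`_i.-1 * q.

End TD.

(* Main.v *)
Require Import Defs.
From HB Require Import structures.
From mathcomp Require Import all_boot all_order all_algebra.
From mathcomp Require Import ring zify.
Set Implicit Arguments. Unset Strict Implicit. Unset Printing Implicit Defensive.
Import GRing.Theory.
Local Open Scope ring_scope.

Section Aux.
Variables (K : fieldType) (V : vectType K).
Implicit Types (A B : 'End(V)).

Lemma eigP A a v : (v \in passmx.leigenspace A a) = (A v == a *: v).
Proof.
by rewrite /passmx.leigenspace memv_ker add_lfunE opp_lfunE scale_lfunE id_lfunE subr_eq0.
Qed.

Lemma eig_disj A a b v : a != b -> v \in passmx.leigenspace A a ->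
  v \in passmx.leigenspace A b -> v = 0.
Proof.
move=> ab; rewrite !eigP => /eqP -> /eqP /eqP.
rewrite -subr_eq0 -scalerBl scaler_eq0 subr_eq0 (negbTE ab) /=.
by move/eqP.
Qed.

Lemma eigsp_vec A th i v : v \in eigsp A th i -> A v = th`_i *: v.
Proof.
rewrite /eigsp; case: ifP => _; first by rewrite eigP => /eqP.
by rewrite memv0 => /eqP ->; rewrite linear0 scaler0.
Qed.

Lemma eigsp_stable A th i : (A @: eigsp A th i <= eigsp A th i)%VS.
Proof.
apply/subvP => w /memv_imgP [v Hv ->].
by rewrite (eigsp_vec Hv) memvZ.
Qed.

Definition sfun (q x y : K) :=
  x ^+ 3 - (q + q^-1 + 1) * x ^+ 2 * y + (q + q^-1 + 1) * x * y ^+ 2 - y ^+ 3.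

Lemma serre_expand (q : K) A B v u1 u2 u3 a t b :
  A v = t *: v -> B v = u1 + u2 + u3 ->
  A u1 = a *: u1 -> A u2 = t *: u2 -> A u3 = b *: u3 ->
  A (A (A (B v))) - (q + q^-1 + 1) *: A (A (B (A v)))
    + (q + q^-1 + 1) *: A (B (A (A v))) - B (A (A (A v)))
  = sfun q a t *: u1 + sfun q b t *: u3.
Proof.
move=> Av Bv A1 A2 A3.
pose phi (x y z : K) := x *: u1 + y *: u2 + z *: u3.
have phiD x y z x' y' z' : phi x y z + phi x' y' z' = phi (x + x') (y + y') (z + z').
  by rewrite /phi !scalerDl addrACA (addrACA (x *: u1)).
have phiZ k x y z : k *: phi x y z = phi (k * x) (k * y) (k * z).
  by rewrite /phi !scalerDr !scalerA.
have phiN x y z : - phi x y z = phi (- x) (- y) (- z).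
  by rewrite -scaleN1r phiZ !mulN1r.
have Aphi x y z : A (phi x y z) = phi (x * a) (y * t) (z * b).
  by rewrite /phi !linearD !linearZ /= A1 A2 A3 !scalerA.
have Bv' : B v = phi 1 1 1 by rewrite /phi !scale1r.
have Bphi k : B (k *: v) = phi k k k by rewrite linearZ /= Bv' phiZ !mulr1.
do 4 rewrite ?Av ?linearZ /=. rewrite !Bv' !Aphi !phiN !phiZ !phiD.
have -> : sfun q a t *: u1 + sfun q b t *: u3 = phi (sfun q a t) 0 (sfun q b t).
  by rewrite /phi scale0r addr0.
rewrite /phi /sfun; congr (_ *: _ + _ *: _ + _ *: _); ring.
Qed.

Definition prevsp A th i : {vspace V} := if i is j.+1 then eigsp A th j else 0%VS.

Lemma prev_vec A th i u : u \in prevsp A th i -> A u = th`_(i.-1) *: u.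
Proof.
case: i => [|j] /=; last exact: eigsp_vec.
by rewrite memv0 => /eqP ->; rewrite linear0 scaler0.
Qed.

Lemma decomp A B th i v : eig_seq A B th -> (i < size th)%N -> v \in eigsp A th i ->
  exists u1 u2 u3, [/\ B v = u1 + u2 + u3, u1 \in prevsp A th i,
     u2 \in eigsp A th i & u3 \in eigsp A th i.+1].
Proof.
case=> _ _ H3 Hi Hv.
have /(subvP (H3 i Hi)) : B v \in (B @: eigsp A th i)%VS by apply: memv_img.
case/memv_addP => w /memv_addP [u1 H1 [u2 H2 ->]] [u3 H3' ->].
by exists u1, u2, u3.
Qed.

Definition Sexp (q : K) A B v :=
  A (A (A (B v))) - (q + q^-1 + 1) *: A (A (B (A v)))
    + (q + q^-1 + 1) *: A (B (A (A v))) - B (A (A (A v))).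

Lemma serre_at (q : K) A B th i v : eig_seq A B th -> (i < size th)%N -> v \in eigsp A th i ->
  exists u1 u2 u3, [/\ B v = u1 + u2 + u3, u1 \in prevsp A th i,
     u2 \in eigsp A th i, u3 \in eigsp A th i.+1 &
     Sexp q A B v = sfun q th`_(i.-1) th`_i *: u1 + sfun q th`_i.+1 th`_i *: u3].
Proof.
move=> Hs Hi Hv; have [u1 [u2 [u3 [E H1 H2 H3]]]] := decomp Hs Hi Hv.
exists u1, u2, u3; split => //.
apply: serre_expand; rewrite ?E //.
- exact: eigsp_vec.
- exact: prev_vec.
- exact: eigsp_vec.
- exact: eigsp_vec.
Qed.

Lemma sfun_geo1 (q x : K) : q != 0 -> sfun q x (x * q) = 0.
Proof. by move=> q0; rewrite /sfun; field. Qed.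
Lemma sfun_geo2 (q x : K) : q != 0 -> sfun q (x * q) x = 0.
Proof. by move=> q0; rewrite /sfun; field. Qed.

Lemma sfun_fact (q x y : K) : q != 0 -> q * sfun q x y = (x - y) * (x - q * y) * (q * x - y).
Proof. by move=> q0; rewrite /sfun; field. Qed.

Lemma serre_of_geo (q : K) A B th : q != 0 -> Defs.diagonalizable A -> eig_seq A B th ->
  qgeometric q th -> qSerre q A B.
Proof.
move=> q0 [s Hs] Hth Hg v.
pose Sf := ((A \o A \o A \o B) - (q + q^-1 + 1) *: (A \o A \o B \o A)
    + (q + q^-1 + 1) *: (A \o B \o A \o A) - (B \o A \o A \o A))%VF.
have SfE w : Sf w = Sexp q A B w.
  by rewrite /Sf /Sexp !add_lfunE !opp_lfunE !scale_lfunE !comp_lfunE.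
suff : v \in lker Sf by rewrite memv_ker SfE => /eqP.
have : v \in (fullv : {vspace V}) := memvf v.
rewrite -Hs; apply/subvP; apply: (big_ind (fun U : {vspace V} => (U <= lker Sf)%VS)).
- exact: sub0v.
- by move=> U W HU HW; rewrite subv_add HU HW.
move=> a _; have [ev|nev] := boolP (passmx.leigenvalue A a); last first.
  by move: nev; rewrite /passmx.leigenvalue negbK => /eqP ->; apply: sub0v.
case: Hth => Hu Hev H3.
have ain : a \in th by apply/Hev.
have Hi : (index a th < size th)%N by rewrite index_mem.
have -> : passmx.leigenspace A a = eigsp A th (index a th) by rewrite /eigsp Hi nth_index.
set i := index a th in Hi *.
apply/subvP => w Hw; rewrite memv_ker SfE.
have [u1 [u2 [u3 [_ H1 _ H3' ->]]]] := serre_at q (And3 Hu Hev H3) Hi Hw.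
have -> : sfun q th`_i.-1 th`_i *: u1 = 0.
  move: H1 Hi; case: (i) => [|j] /=; first by rewrite memv0 => /eqP ->; rewrite scaler0.
  by move=> _ Hj; rewrite (Hg j.+1) //= ?sfun_geo1 ?scale0r.
have -> : sfun q th`_i.+1 th`_i *: u3 = 0.
  have [Hi1|Hi1] := ltnP i.+1 (size th).
    by rewrite (Hg i.+1) //= ?sfun_geo2 ?scale0r // Hi1.
  by move: H3'; rewrite /eigsp ltnNge Hi1 /= memv0 => /eqP ->; rewrite scaler0.
by rewrite addr0.
Qed.

Ltac szl H := apply: (leq_trans _ H); lia.

Lemma sum_stable A th n :
  (A @: (\sum_(j < n) eigsp A th j) <= \sum_(j < n) eigsp A th j)%VS.
Proof.
rewrite limg_sum; apply/subv_sumP => j _.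
apply: subv_trans (eigsp_stable A th j) _.
exact: (sumv_sup j).
Qed.

Lemma W_indep A th n k w : uniq th -> (n <= k)%N -> (k < size th)%N ->
  w \in (\sum_(j < n) eigsp A th j)%VS -> w \in eigsp A th k -> w = 0.
Proof.
move=> Hu; elim: n w => [|n IH] w Hnk Hk.
  by rewrite big_ord0 memv0 => /eqP.
rewrite big_ord_recr /= => /memv_addP [w1 Hw1 [x Hx ->]] Hwk.
set y := A (w1 + x) - th`_n *: (w1 + x).
have y1 : y = (th`_k - th`_n) *: (w1 + x) by rewrite /y (eigsp_vec Hwk) scalerBl.
have y2 : y = A w1 - th`_n *: w1.
  by rewrite /y linearD /= (eigsp_vec Hx) scalerDr opprD addrACA subrr addr0.
have yW : y \in (\sum_(j < n) eigsp A th j)%VS.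
  rewrite y2 memvB ?memvZ //.
  exact: (subvP (sum_stable A th n)) _ (memv_img A Hw1).
have yk : y \in eigsp A th k by rewrite y1 memvZ.
have := IH y (ltnW Hnk) Hk yW yk; rewrite y1 => /eqP; rewrite scaler_eq0.
have -> : (th`_k - th`_n == 0) = false.
  apply/negbTE; rewrite subr_eq0 nth_uniq //; last exact: ltn_trans Hnk Hk.
  by rewrite neq_ltn Hnk orbT.
by move/eqP.
Qed.

Lemma prev_next0 A th i u : uniq th -> (i.+1 < size th)%N ->
  u \in prevsp A th i -> u \in eigsp A th i.+1 -> u = 0.
Proof.
move=> Hu Hi; case: i Hi => [|j] Hj /=; first by rewrite memv0 => /eqP.
rewrite /eigsp !ifT //; last exact: ltnW (ltnW Hj).
move=> H1 H2; apply: (eig_disj _ H1 H2); rewrite nth_uniq //; last exact: ltnW (ltnW Hj).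
by rewrite neq_ltn (ltn_trans (ltnSn j) (ltnSn j.+1)).
Qed.

Definition irred A B := forall W : {vspace V},
  (A @: W <= W)%VS -> (B @: W <= W)%VS -> W = 0%VS \/ W = fullv.

Lemma step (q : K) A B th i : q != 0 -> eig_seq A B th -> irred A B -> qSerre q A B ->
  (i.+1 < size th)%N -> (th`_i.+1 == q * th`_i) || (th`_i == q * th`_i.+1).
Proof.
move=> q0 Hs Hirr HS Hi.
have Hs' := Hs; case: Hs' => Hu Hev H3.
apply: contraT; rewrite negb_or => /andP [n1 n2].
have ne : th`_i.+1 != th`_i by rewrite nth_uniq //; [lia | szl Hi].
have sne : sfun q th`_i.+1 th`_i != 0.
  apply/negP => /eqP E.
  have := sfun_fact th`_i.+1 th`_i q0; rewrite E mulr0 => /esym/eqP.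
  rewrite !mulf_eq0 !subr_eq0 (negbTE ne) (negbTE n1) /= eq_sym.
  by rewrite (negbTE n2).
have Bsub : (B @: eigsp A th i <= prevsp A th i + eigsp A th i)%VS.
  apply/subvP => w /memv_imgP [v Hv ->].
  have [u1 [u2 [u3 [E H1 H2 H3' HE]]]] := serre_at q Hs (ltnW Hi) Hv.
  have S0 : Sexp q A B v = 0 := HS v.
  rewrite HE in S0.
  have e3 : sfun q th`_i.+1 th`_i *: u3 = - (sfun q th`_i.-1 th`_i *: u1).
    by apply/eqP; rewrite -addr_eq0 addrC S0.
  have z : sfun q th`_i.+1 th`_i *: u3 = 0.
    apply: (@prev_next0 A _ _ _ Hu Hi).
      by rewrite e3 rpredN memvZ.
    by rewrite memvZ.
  move/eqP: z; rewrite scaler_eq0 (negbTE sne) /= => /eqP u30.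
  by rewrite E u30 addr0 memv_add.
set W := (\sum_(j < i.+1) eigsp A th j)%VS.
have inW k : (k < i.+1)%N -> (eigsp A th k <= W)%VS.
  by move=> Hk; exact: (sumv_sup (Ordinal Hk)).
have inWp k : (k < i.+1)%N -> (prevsp A th k <= W)%VS.
  case: k => [|k] Hk /=; first exact: sub0v.
  by apply: inW; lia.
have AW : (A @: W <= W)%VS by apply: sum_stable.
have BW : (B @: W <= W)%VS.
  rewrite limg_sum; apply/subv_sumP => j _.
  have Hj := ltn_ord j.
  have [ji|ij] := ltnP j i.
    apply: subv_trans (H3 j _) _; first by lia.
    have h1 : (prevsp A th j <= W)%VS by apply: inWp; lia.
    have h2 : (eigsp A th j <= W)%VS by apply: inW; lia.
    have h3 : (eigsp A th j.+1 <= W)%VS by apply: inW; lia.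
    by rewrite !subv_add h2 h3 !andbT; exact: h1.
  have -> : (j : nat) = i by lia.
  apply: subv_trans Bsub _.
  by rewrite subv_add inW ?inWp.
have ev k : (k < size th)%N -> eigsp A th k != 0%VS.
  move=> Hk; rewrite /eigsp Hk.
  by have /Hev : th`_k \in th by apply: mem_nth.
case: (Hirr W AW BW) => HW.
  have := ev 0%N (ltn_trans (ltn0Sn _) Hi).
  by rewrite -subv0 -HW inW.
pose w := vpick (eigsp A th i.+1).
have wnz : w != 0 by rewrite vpick0 ev.
have wW : w \in W by rewrite HW memvf.
have w0 := W_indep Hu (leqnn i.+1) Hi wW (memv_pick (eigsp A th i.+1)).
by rewrite w0 eqxx in wnz.
Qed.

Lemma geo_or_rev (q : K) (th : seq K) : q != 0 -> q != 1 -> q != -1 -> uniq th ->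
  (forall i, (i.+1 < size th)%N -> (th`_i.+1 == q * th`_i) || (th`_i == q * th`_i.+1)) ->
  qgeometric q th \/ qgeometric q (rev th).
Proof.
move=> q0 q1 qm1 Hu Hst.
have neq i j : (i < size th)%N -> (j < size th)%N -> i != j -> th`_i != th`_j.
  by move=> Hi Hj ij; rewrite nth_uniq.
have hq2 : 1 - q * q != 0.
  rewrite (_ : 1 - q * q = (1 - q) * (q + 1)); last by ring.
  by apply: mulf_neq0; [rewrite subr_eq0 eq_sym | rewrite addr_eq0].
have excl i : (i.+1 < size th)%N -> th`_i.+1 == q * th`_i -> th`_i != q * th`_i.+1.
  move=> Hi /eqP e1; apply/negP => /eqP e2.
  have e1' := e1; rewrite e2 in e1'.
  have : th`_i.+1 * (1 - q * q) = 0.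
    by rewrite mulrBr mulr1 {1}e1'; ring.
  move/eqP; rewrite mulf_eq0 (negbTE hq2) orbF => /eqP x0.
  have : th`_i.+1 != th`_i by apply: neq => //; [exact: ltnW | rewrite neq_ltn ltnSn orbT].
  by rewrite e2 x0 mulr0 eqxx.
pose D i := th`_i.+1 == q * th`_i.
have prop i : (i.+2 < size th)%N -> D i = D i.+1.
  move=> Hi; have s0 := Hst i (ltnW Hi); have s1 := Hst i.+1 Hi.
  have nii : th`_i.+2 != th`_i.
    by apply: neq => //; [exact: ltnW (ltnW Hi) | lia].
  rewrite /D; case: (boolP (th`_i.+1 == q * th`_i)) => d0;
    case: (boolP (th`_i.+2 == q * th`_i.+1)) => d1 //; exfalso.
  - move: s1; rewrite (negbTE d1) /= => /eqP e1; move/eqP: d0 => e0.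
    have : q * th`_i.+2 = q * th`_i by rewrite -e1 e0.
    by move/(mulfI q0)/eqP; rewrite (negbTE nii).
  - move: s0; rewrite (negbTE d0) /= => /eqP e0; move/eqP: d1 => e1.
    by move: nii; rewrite e1 e0 eqxx.
have all0 i : (i.+1 < size th)%N -> D i = D 0.
  elim: i => [|i IH] Hi //.
  by rewrite -(prop i Hi) IH // ltnW.
case: (boolP (D 0)) => d0; [left | right].
  move=> i /andP [i0 isz]; case: i i0 isz => // j _ Hj /=.
  by have := all0 j Hj; rewrite d0 => /eqP ->; rewrite mulrC.
move=> k /andP [k0 ksz]; rewrite size_rev in ksz.
rewrite !nth_rev //; last exact: leq_ltn_trans (leq_pred k) ksz.
move: k0 ksz; set d := size th => k0 ksz.
have -> : (d - k.-1.+1 = (d - k.+1).+1)%N by lia.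
have Hj : ((d - k.+1).+1 < d)%N by lia.
have := Hst _ Hj; rewrite -/(D _) all0 // (negbTE d0) /= => /eqP ->.
by rewrite mulrC.
Qed.

Lemma eigsp_ge A th k : (size th <= k)%N -> eigsp A th k = 0%VS.
Proof. by rewrite /eigsp leqNgt => /negbTE ->. Qed.

Lemma eigsp_rev A th k : (k < size th)%N ->
  eigsp A (rev th) k = eigsp A th (size th - k.+1).
Proof.
move=> Hk; rewrite /eigsp size_rev Hk nth_rev // ifT //.
move: Hk; set d := size th => Hk; lia.
Qed.

Lemma eig_seq_rev A B th : eig_seq A B th -> eig_seq A B (rev th).
Proof.
case=> Hu Hev H3; split; first by rewrite rev_uniq.
  by move=> a; rewrite mem_rev.
move=> i; rewrite size_rev => Hi.
rewrite eigsp_rev //.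
have Hj : (size th - i.+1 < size th)%N by move: Hi; set d := size th => Hi; lia.
apply: subv_trans (H3 _ Hj) _.
set P' := (match i with 0%N => 0%VS | i'.+1 => eigsp A (rev th) i' end).
set Vj := eigsp A th (size th - i.+1).
set N' := eigsp A (rev th) i.+1.
have hP : (eigsp A th (size th - i.+1).+1 <= P')%VS.
  rewrite /P'; case: i Hi Hj {P' Vj N'} => [|i'] Hi Hj.
    by rewrite eigsp_ge ?sub0v //; move: Hi; set d := size th => Hi; lia.
  rewrite eigsp_rev; last by apply: ltnW.
  have -> : ((size th - i'.+2).+1 = size th - i'.+1)%N.
    by move: Hi; set d := size th => Hi; lia.
  exact: subvv.
have hN : ((if (size th - i.+1)%N is j.+1 then eigsp A th j else 0%VS) <= N')%VS.
  rewrite /N'; case E: (size th - i.+1)%N => [|j]; first exact: sub0v.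
  have Hi1 : (i.+1 < size th)%N by move: E; set d := size th => E; lia.
  rewrite eigsp_rev //.
  have -> : (size th - i.+2 = j)%N by move: E Hi1; set d := size th => E Hi1; lia.
  exact: subvv.
rewrite !subv_add; apply/andP; split; first (apply/andP; split).
- exact: subv_trans hN (addvSr _ _).
- exact: subv_trans (addvSr P' Vj) (addvSl _ _).
- exact: subv_trans hP (subv_trans (addvSl P' Vj) (addvSl _ _)).
Qed.

Lemma geo_of_serre (q : K) A B th : q != 0 -> q != 1 -> q != -1 ->
  eig_seq A B th -> irred A B -> qSerre q A B ->
  exists th', eig_seq A B th' /\ qgeometric q th'.
Proof.
move=> q0 q1 qm1 Hs Hirr HS.
have Hu : uniq th by case: Hs.
case: (geo_or_rev q0 q1 qm1 Hu (fun i Hi => step q0 Hs Hirr HS Hi)) => Hg.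
  by exists th.
by exists (rev th); split => //; apply: eig_seq_rev.
Qed.
End Aux.

Unset Implicit Arguments.

Theorem lemma4p8 (K : fieldType) (V : vectType K) (A As : 'End(V)) (q : K) :
  TDpair A As -> q != 0 -> q != 1 -> q != -1 ->
  ((qSerre q A As /\ qSerre q As A) <->
   ((exists th, eigenvalue_sequence A As th /\ qgeometric q th) /\
    (exists th, dual_eigenvalue_sequence A As th /\ qgeometric q th))).
Proof.
case=> _ [dA dAs] [th1 H1] [th2 H2] Hirr q0 q1 qm1; split.
  case=> S1 S2; split.
    exact: (geo_of_serre q0 q1 qm1 H1 Hirr S1).
  apply: (geo_of_serre q0 q1 qm1 H2 _ S2).
  by move=> W h1 h2; apply: Hirr.
case=> [[th [H g]] [th' [H' g']]]; split.
  exact: (serre_of_geo q0 dA H g).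
exact: (serre_of_geo q0 dAs H' g').
Qed.
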